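(* Let $G$ be a group and let $M$ and $K$ be normal subgroups of $G$, where $M$ is finitely generated as a normal subgroup of $G$. If $H$ is a finite index normal subgroup of $G$ containing $M$, then \[relsize(M;H,K\cap H)\le |G:H|\,relsize(M;G,K).\]
   Context: For a group $G$, a normal subgroup $K$ and $g\in G$, with $\pi:G\to G/K$ the quotient map: if $g\in K$, $\nu(g;G,K)$ is the supremum of the orders of $\pi(a)$ in $G/K$ over all $a\in G$ with $a^n=g$ for some integer $n$; if $g\notin K$, $\nu(g;G,K)$ is the supremum of all non-zero integers $n$ with $g=a^n$ for some $a\in G$; $\nu(g;G,K)^{-1}$ is taken to be $0$ if $\nu(g;G,K)$ is infinite. For a finite set $S=\{s_1,\ldots,s_m\}\subseteq G$, $relsize(S;G,K)=\sum_{i=1}^m\nu(s_i;G,K)^{-1}$. For a normal subgroup $M$ of $G$ finitely generated as a normal subgroup, $relsize(M;G,K)$ is the infimum of $relsize(S;G,K)$ over all finite $S\subseteq G$ whose normal closure in $G$ is $M$. Likewise $relsize(M;H,K\cap H)$ is computed in the group $H$ with its normal subgroup $K\cap H$, over finite $S\subseteq H$ whose normal closure in $H$ is $M$. *)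

(* Defs.v *)
From HB Require Import structures.
From mathcomp Require Import all_boot all_order all_algebra.
From mathcomp Require Import monoid.
From mathcomp Require Import all_classical all_reals.
From mathcomp Require Import ereal finmap.


Set Implicit Arguments.
Unset Strict Implicit.
Unset Printing Implicit Defensive.

Import Order.TTheory GRing.Theory Num.Theory.
Local Open Scope classical_set_scope.

Section Defs.
Variable gT : groupType.

Definition is_subgroup (S : set gT) : Prop :=
  S 1%g /\ (forall x y, S x -> S y -> S (x * y^-1)%g).

Definition normal_in (A N : set gT) : Prop :=
  is_subgroup N /\ N `<=` A /\ (forall a x, A a -> N x -> N (x ^ a)%g).

Definition ncl (A : set gT) (s : seq gT) : set gT :=
  [set x | forall N : set gT, normal_in A N -> (forall y, y \in s -> N y) -> N x].

Definition zpow (a : gT) (n : int) : gT :=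
  match n with
  | Posz k => (a ^+ k)%g
  | Negz k => (a ^- k.+1)%g
  end.

Variable R : realType.
Local Open Scope ereal_scope.

(* order of the image of a in the quotient by K: least m > 0 with a^m in K,
   and +oo if there is none (ereal_inf of the empty set is +oo) *)
Definition coset_order (K : set gT) (a : gT) : \bar R :=
  ereal_inf [set ((m%:R)%:E : \bar R) | m in [set m : nat | (0 < m)%N /\ K (a ^+ m)%g]].

Definition nu (A K : set gT) (g : gT) : \bar R :=
  if pselect (K g) then
    ereal_sup [set coset_order K a | a in [set a | A a /\ exists n : int, zpow a n = g]]
  else
    ereal_sup [set ((n%:~R)%:E : \bar R) |
                n in [set n : int | (n != 0)%R /\ exists a, A a /\ zpow a n = g]].

(* nu^{-1}, with the convention 1/oo = 0 *)
Definition nuinv (A K : set gT) (g : gT) : R :=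
  if nu A K g == +oo then 0%R else ((fine (nu A K g))^-1)%R.

Local Close Scope ereal_scope.

(* relsize(S; A, K) for a finite set S given as a duplicate-free list *)
Definition relsize_list (A K : set gT) (s : seq gT) : R :=
  (\sum_(x <- s) nuinv A K x)%R.

Definition relsize (A K M : set gT) : R :=
  inf [set relsize_list A K s |
        s in [set s : seq gT | uniq s /\ (forall y, y \in s -> A y) /\ ncl A s = M]].

Definition lcoset (x : gT) (H : set gT) : set gT := [set (x * h)%g | h in H].
Definition cosets (H : set gT) : set (set gT) := range (fun x => lcoset x H).
Definition group_index (H : set gT) : nat := #|` fset_set (cosets H)|.

End Defs.

(* Main.v *)
Require Import Defs.
From HB Require Import structures.
From mathcomp Require Import all_boot all_order all_algebra.
From mathcomp Require Import monoid.
From mathcomp Require Import all_classical all_reals ereal.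
From mathcomp Require Import finmap.
Import Order.TTheory GRing.Theory Num.Theory.
Local Open Scope classical_set_scope.
Local Open Scope ring_scope.
Set Implicit Arguments.
Unset Strict Implicit.
Unset Printing Implicit Defensive.
Section GroupBasics.
Variable gT : groupType.
Local Open Scope group_scope.
Implicit Types (S H K M N : set gT) (x y a g : gT).

Lemma sg1 S : is_subgroup S -> S 1.
Proof. by case. Qed.

Lemma sgV S x : is_subgroup S -> S x -> S x^-1.
Proof. by move=> [S1 SD] Sx; have := SD _ _ S1 Sx; rewrite mul1g. Qed.

Lemma sgM S x y : is_subgroup S -> S x -> S y -> S (x * y).
Proof.
move=> sS Sx Sy; have := (sS.2 _ _ Sx (sgV sS Sy)); by rewrite invgK.
Qed.

Lemma sgX S x n : is_subgroup S -> S x -> S (x ^+ n).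
Proof.
move=> sS Sx; elim: n => [|n IH]; first by rewrite expg0; apply: sg1.
by rewrite expgS; apply: sgM.
Qed.

Lemma sgZ S x n : is_subgroup S -> S x -> S (zpow x n).
Proof. move=> sS Sx; case: n => k; rewrite /zpow; [exact: sgX|apply: sgV => //; exact: sgX]. Qed.

Lemma sgMl S x y : is_subgroup S -> S x -> S (x * y) -> S y.
Proof. by move=> sS Sx Sxy; have := sgM sS (sgV sS Sx) Sxy; rewrite mulKg. Qed.

Lemma sgVV S x : is_subgroup S -> S x^-1 -> S x.
Proof. by move=> sS /(sgV sS); rewrite invgK. Qed.

Lemma nconj N x g : normal_in setT N -> N x -> N (x ^ g).
Proof. by move=> [_ [_ nN]] Nx; apply: nN. Qed.

Lemma zpowJ a c n : zpow (a ^ c) n = (zpow a n) ^ c.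
Proof. by case: n => k /=; rewrite ?conjVg conjXg. Qed.

Lemma zpow_nat a (k : nat) : zpow a k = a ^+ k.
Proof. by []. Qed.

Lemma lcoset_eqP H x y : is_subgroup H ->
  (lcoset x H = lcoset y H <-> H (x^-1 * y)).
Proof.
move=> sH; split.
  move=> e; have : lcoset y H y by exists 1; [exact: sg1|rewrite mulg1].
  by rewrite -e => -[h Hh <-]; rewrite mulKg.
move=> Hxy; apply/seteqP; split=> z [h Hh <-].
  exists (y^-1 * x * h); last by rewrite !mulgA mulgV mul1g.
  by apply: sgM => //; rewrite -[y^-1 * x]invgK invgM invgK; apply: sgV.
by exists (x^-1 * y * h); [apply: sgM|rewrite !mulgA mulgV mul1g].
Qed.

Lemma lcoset_mem H x : is_subgroup H -> lcoset x H x.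
Proof. by move=> sH; exists 1; [exact: sg1|rewrite mulg1]. Qed.

End GroupBasics.
Section Pigeon.
Variable gT : groupType.
Local Open Scope group_scope.
Implicit Types (S H K M N : set gT) (x y a g : gT).

Lemma coset_in H x : finite_set (cosets H) ->
  lcoset x H \in fset_set (cosets H).
Proof. by move=> fH; rewrite in_fset_set //; apply/mem_set; exists x. Qed.

Lemma powH_diff H a i j : is_subgroup H -> (i <= j)%N ->
  lcoset (a ^+ i) H = lcoset (a ^+ j) H -> H (a ^+ (j - i)).
Proof.
move=> sH lij /(lcoset_eqP _ _ sH).
by rewrite -{1}(subnKC lij) expgnDr mulKg.
Qed.

Lemma pigeon H a : is_subgroup H -> finite_set (cosets H) ->
  exists k, [/\ (0 < k)%N, (k <= group_index H)%N & H (a ^+ k)].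
Proof.
move=> sH fH.
pose s := map (fun j => lcoset (a ^+ j) H) (iota 0 (group_index H).+1).
have : ~~ uniq s.
  apply/negP => us.
  have := uniq_leq_size us (_ : {subset s <= fset_set (cosets H)}).
  rewrite size_map size_iota /group_index ltnn => h.
  suff : false by [].
  by apply: h => X /mapP [j _ ->]; apply: coset_in.
case/(uniqPn (lcoset 1 H)) => i [j [lij jlt]].
rewrite size_map size_iota in jlt.
rewrite !(nth_map 0%N) ?size_iota ?(ltn_trans lij) // !nth_iota ?(ltn_trans lij) // !add0n.
move=> e; exists (j - i)%N; split.
- by rewrite subn_gt0.
- by rewrite leq_subLR; apply: leq_trans (leq_addl _ _); rewrite -ltnS.
- by apply: powH_diff e => //; apply: ltnW.
Qed.

Lemma min_power H a : is_subgroup H -> finite_set (cosets H) ->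
  exists d, [/\ (0 < d)%N, (d <= group_index H)%N, H (a ^+ d) &
     forall j, (0 < j < d)%N -> ~ H (a ^+ j)].
Proof.
move=> sH fH.
have exP : exists k, (0 < k)%N && `[< H (a ^+ k) >].
  by have [k [k0 _ Hk]] := pigeon a sH fH; exists k; rewrite k0; apply/asboolP.
case: (ex_minnP exP) => d /andP [d0 /asboolP Hd] dmin.
have [k [k0 kidx Hk]] := pigeon a sH fH.
exists d; split => //.
  apply: leq_trans kidx; apply: dmin; rewrite k0; exact/asboolP.
move=> j /andP [j0 jd] Hj.
have := dmin j; rewrite j0 /=.
have -> : `[< H (a ^+ j) >] by exact/asboolP.
by move=> /(_ isT); rewrite leqNgt jd.
Qed.

Lemma min_power_dvd H a d n : is_subgroup H -> (0 < d)%N -> H (a ^+ d) ->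
  (forall j, (0 < j < d)%N -> ~ H (a ^+ j)) -> H (a ^+ n) -> (d %| n)%N.
Proof.
move=> sH d0 Hd dmin Hn.
have e : a ^+ n = (a ^+ d) ^+ (n %/ d) * a ^+ (n %% d).
  by rewrite -expgnA -expgnDr mulnC -divn_eq.
have Hr : H (a ^+ (n %% d)).
  by apply: (sgMl sH (sgX (n %/ d) sH Hd)); rewrite -e.
apply/negPn/negP => nd.
apply: (dmin (n %% d)%N) => //.
by rewrite lt0n -/(dvdn d n) nd ltn_pmod.
Qed.

End Pigeon.
Section Orbit.
Variable gT : groupType.
Local Open Scope group_scope.
Implicit Types (S H K M N : set gT) (x y a g : gT).

Lemma lcoset_mulr H x y a : normal_in setT H ->
  lcoset (x * a) H = lcoset y H -> lcoset x H = lcoset (y * a^-1) H.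
Proof.
move=> nH; have sH := nH.1.
move=> /(lcoset_eqP _ _ sH) h; apply/(lcoset_eqP _ _ sH).
have := nconj a^-1 nH h; rewrite /conjg invgK invgM !mulgA.
by rewrite mulgV mul1g.
Qed.

Lemma coset_pow_inj H x a d i j : is_subgroup H ->
  (forall k, (0 < k < d)%N -> ~ H (a ^+ k)) -> (i < d)%N -> (j < d)%N ->
  lcoset (x * a ^+ i) H = lcoset (x * a ^+ j) H -> i = j.
Proof.
move=> sH dmin.
wlog lij : i j / (i <= j)%N.
  move=> W id jd e; case: (leqP i j) => [l|l]; first exact: W.
  by symmetry; apply: W => //; apply: ltnW.
move=> id jd /(lcoset_eqP _ _ sH); rewrite invgM -mulgA mulKg.
rewrite -{1}(subnKC lij) expgnDr mulKg => Hd.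
apply/eqP; rewrite eqn_leq lij /= leqNgt; apply/negP => lt.
apply: (dmin (j - i)%N) => //.
by rewrite subn_gt0 lt /= (leq_ltn_trans (leq_subr _ _) jd).
Qed.

Lemma orbit_cover H a d : normal_in setT H -> (0 < d)%N -> H (a ^+ d) ->
  (forall j, (0 < j < d)%N -> ~ H (a ^+ j)) ->
  forall C : seq (set gT), uniq C -> (forall X, X \in C -> exists x, X = lcoset x H) ->
  (forall x, lcoset x H \in C -> lcoset (x * a) H \in C) ->
  exists Rl : seq gT, (size Rl * d <= size C)%N /\
    forall x, lcoset x H \in C ->
      exists r j h, [/\ r \in Rl, H h & x = r * a ^+ j * h].
Proof.
move=> nH d0 Hd dmin C; have sH := nH.1.
have [n] := ubnP (size C); elim: n => // n IH in C *.
case: C => [|X C0] szC uC cosC clC.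
  by exists [::]; split => // x; rewrite in_nil.
have [x0 eX] := cosC X (mem_head _ _).
pose C := X :: C0.
pose O := map (fun j => lcoset (x0 * a ^+ j) H) (iota 0 d).
pose C' := seq.filter (fun Y => Y \notin O) C.
have inO x : lcoset x H \in O -> exists j, (j < d)%N /\ lcoset x H = lcoset (x0 * a ^+ j) H.
  by move=> /mapP [j]; rewrite mem_iota add0n => jd e; exists j.
have OC j : lcoset (x0 * a ^+ j) H \in C.
  elim: j => [|j IHj]; first by rewrite expg0 mulg1 -eX mem_head.
  by rewrite expgSr mulgA; apply: clC.
have uO : uniq O.
  rewrite map_inj_in_uniq ?iota_uniq // => i j; rewrite !mem_iota !add0n.
  by move=> /andP[_ id] /andP[_ jd]; apply: (coset_pow_inj sH dmin id jd).
have cnt : (d <= count (mem O) C)%N.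
  rewrite -size_filter; have := uniq_leq_size uO; rewrite size_map size_iota; apply.
  by move=> Y YO; rewrite mem_filter; apply/andP; split; [exact: YO|case/mapP: YO => j _ ->].
have szC' : (size C' < n)%N.
  rewrite ltnS in szC; apply: (leq_trans _ szC); rewrite size_filter -(count_predC (mem O) C).
  rewrite -[X in (X < _)%N]add0n ltn_add2r; exact: leq_trans cnt.
have clC' : forall x, lcoset x H \in C' -> lcoset (x * a) H \in C'.
  move=> x; rewrite mem_filter => /andP [xO xC].
  rewrite mem_filter (clC _ xC) andbT; apply/negP => /inO [j [jd e]].
  move: xO; rewrite (lcoset_mulr nH e); apply/negP/negPn.
  case: j jd e => [|j] jd e.
    have -> : lcoset (x0 * a ^+ 0 * a^-1) H = lcoset (x0 * a ^+ d.-1) H.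
      apply/(lcoset_eqP _ _ sH); rewrite expg0 mulg1 invgM invgK mulgA mulgVK.
      by rewrite -expgS prednK.
    by apply/mapP; exists d.-1; last by []; rewrite mem_iota add0n prednK ?leqnn.
  rewrite expgSr mulgA mulgK.
  by apply/mapP; exists j; last by []; rewrite mem_iota add0n (ltn_trans _ jd).
have [R' [szR' covR']] := IH C' szC' (filter_uniq _ uC)
  (fun Y YC => cosC Y (mem_subseq (filter_subseq _ _) YC)) clC'.
exists (x0 :: R'); split.
  rewrite /= mulSn; apply: leq_trans (leq_add (leqnn d) szR') _.
  rewrite /C' size_filter; apply: (leq_trans (leq_add cnt (leqnn _))).
  exact: (eq_leq (count_predC (mem O) C)).
move=> x xC; case: (boolP (lcoset x H \in O)) => [xO|xO].
  have [j [jd e]] := inO x xO.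
  exists x0, j, ((x0 * a ^+ j)^-1 * x); split.
  - exact: mem_head.
  - by apply/(lcoset_eqP _ _ sH).
  - by rewrite mulVKg.
have xC' : lcoset x H \in C' by rewrite mem_filter xO.
have [r [j [h [rR Hh ex]]]] := covR' x xC'.
by exists r, j, h; split => //; rewrite in_cons rR orbT.
Qed.

End Orbit.
Section Ncl.
Variable gT : groupType.
Local Open Scope group_scope.
Implicit Types (S H K M N A : set gT) (x y a g : gT).

Lemma conj_commute s y : commute s y -> s ^ y = s.
Proof. by move=> c; rewrite /conjg c mulKg. Qed.

Lemma zpow_commute a n : commute (zpow a n) a.
Proof.
apply: commute_sym; case: n => k /=.
  exact/commuteX/commute_refl.
exact/commuteV/commuteX/commute_refl.
Qed.

Lemma conj_cover H s a r j h g : normal_in setT H -> commute s a -> H h ->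
  g^-1 = r * a ^+ j * h ->
  exists h', H h' /\ s ^ g = (s ^ r^-1) ^ h'.
Proof.
move=> nH csa Hh eg.
have eg' : g = (r * a ^+ j)^-1 * h^-1 ^ (r * a ^+ j)^-1.
  by rewrite -conjgC -invgM -eg invgK.
exists (h^-1 ^ (r * a ^+ j)^-1); split.
  by apply: nconj => //; apply: sgV nH.1 Hh.
rewrite eg' conjgM invgM (conjgM s) (@conj_commute s (a ^+ j)^-1) //.
exact/commuteV/commuteX.
Qed.

Lemma ncl_normal A L : is_subgroup A -> (forall y, y \in L -> A y) ->
  normal_in A (ncl A L).
Proof.
move=> sA LA; split; [split|split].
- by rewrite /ncl /= => N [sN _] _; apply: sg1.
- rewrite /ncl /= => x y nx ny N [sN nN] LN; apply: sN.2; [exact: nx|exact: ny].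
- move=> x; rewrite /ncl /= => nx; apply: nx => //; split => //; split => // a z Aa Az.
  by rewrite /conjg; apply: sgM => //; [apply: sgV|apply: sgM].
- move=> a x Aa; rewrite /ncl /= => nx N [sN [NA nN]] LN.
  exact: (nN a x Aa (nx N (conj sN (conj NA nN)) LN)).
Qed.

Lemma ncl_mem A L y : y \in L -> ncl A L y.
Proof. by move=> yL N _ LN; apply: LN. Qed.

Lemma ncl_undup A L : ncl A (undup L) = ncl A L.
Proof.
apply/seteqP; split=> x; rewrite /ncl /= => nx N nN LN; apply: nx => // y yL.
  by apply: LN; rewrite mem_undup in yL.
by apply: LN; rewrite mem_undup.
Qed.

Lemma ncl_H_eq H M s L : normal_in setT H -> normal_in setT M -> M `<=` H ->
  ncl setT s = M ->
  (forall l, l \in L -> exists y c, y \in s /\ l = y ^ c) ->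
  (forall y, y \in s -> forall g, exists l h, [/\ l \in L, H h & y ^ g = l ^ h]) ->
  ncl H L = M.
Proof.
move=> nH nM MH eM LC cov.
have LH : forall l, l \in L -> H l.
  move=> l /LC [y [c [ys ->]]]; apply: MH; apply: nconj => //.
  by rewrite -eM; apply: ncl_mem.
have nN := ncl_normal nH.1 LH.
have A : forall y, y \in s -> forall g, ncl H L (y ^ g).
  move=> y ys g; have [l [h [lL Hh ->]]] := cov y ys g.
  by apply: nN.2.2 => //; apply: ncl_mem.
have N'ok : forall x, ncl H L x -> forall g, ncl H L (x ^ g).
  move=> x; rewrite {1}/ncl /= => nx.
  apply: (nx (fun z => forall g, ncl H L (z ^ g))); [split; [split|split]|].
  - by move=> g; rewrite conj1g; apply: sg1 nN.1.
  - move=> u v Nu Nv g; rewrite conjMg conjVg; exact: nN.1.2.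
  - by move=> u /(_ 1); rewrite conjg1 => /nN.2.1.
  - by move=> a u Ha Nu g; rewrite -conjgM.
  - move=> l /LC [y [c [ys ->]]] g; rewrite -conjgM; exact: A.
apply/seteqP; split.
  move=> x nx; apply: (nx M).
    split; first exact: nM.1.
    by split => // a z _ Mz; apply: nconj.
  move=> l /LC [y [c [ys ->]]]; apply: nconj => //.
  by rewrite -eM; apply: ncl_mem.
move=> x; rewrite -eM => nx; apply: (nx (ncl H L)).
  split; first exact: nN.1.
  by split => // a z _ Nz; apply: N'ok.
by move=> y ys; rewrite -(conjg1 y); apply: A.
Qed.

End Ncl.
Section NuLemmas.
Variable R : realType.
Variable gT : groupType.
Implicit Types (S H K M N A : set gT) (x y a g : gT).
Local Open Scope ereal_scope.

Lemma co_spec K a :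
  (coset_order R K a = +oo /\ forall m, (0 < m)%N -> ~ K (a ^+ m)%g) \/
  exists m, [/\ (0 < m)%N, K (a ^+ m)%g,
     (forall m', (0 < m')%N -> K (a ^+ m')%g -> (m <= m')%N) &
     coset_order R K a = (m%:R)%:E].
Proof.
case: (pselect (exists m, (0 < m)%N /\ K (a ^+ m)%g)) => [ex|nex].
  right.
  have exP : exists m, (0 < m)%N && `[< K (a ^+ m)%g >].
    by case: ex => m [m0 Km]; exists m; rewrite m0; apply/asboolP.
  case: (ex_minnP exP) => m /andP [m0 /asboolP Km] mmin.
  exists m; split => //.
    by move=> m' m'0 Km'; apply: mmin; rewrite m'0; apply/asboolP.
  apply/eqP; rewrite eq_le; apply/andP; split.
    by apply: ereal_inf_lbound; exists m.
  apply: le_ereal_inf_tmp => _ [m' [m'0 Km'] <-].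
  rewrite lee_fin ler_nat; apply: mmin; rewrite m'0; exact/asboolP.
left; split; last by move=> m m0 Km; apply: nex; exists m.
rewrite /coset_order.
have -> : [set m : nat | (0 < m)%N /\ K (a ^+ m)%g] = set0.
  by apply/seteqP; split => // m [m0 Km]; apply: nex; exists m.
by rewrite image_set0 ereal_inf0.
Qed.

Lemma co_le K1 K2 a b d : (0 < d)%N ->
  (forall m, (0 < m)%N -> K2 (b ^+ m)%g -> K1 (a ^+ (d * m))%g) ->
  coset_order R K1 a <= (d%:R)%:E * coset_order R K2 b.
Proof.
move=> d0 h; case: (co_spec K2 b) => [[-> _]|[m [m0 Km _ ->]]].
  by rewrite gt0_muley ?leey // lte_fin ltr0n.
rewrite -EFinM -natrM; apply: ereal_inf_lbound; exists (d * m)%N => //.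
by split; [rewrite muln_gt0 d0 m0|apply: h].
Qed.

Definition finv (u : \bar R) : R := if u == +oo then 0%R else ((fine u)^-1)%R.

Lemma nuinvE A K g : nuinv R A K g = finv (nu R A K g).
Proof. by []. Qed.

Lemma finv_ge0 (u : \bar R) : 1 <= u -> (0 <= finv u)%R.
Proof.
case: u => [r||] //=; rewrite /finv //= lee_fin => r1.
by rewrite invr_ge0 (le_trans ler01 r1).
Qed.

Lemma finv_anti (u v : \bar R) : 1 <= u -> u <= v -> (finv v <= finv u)%R.
Proof.
case: u => [r||] //; case: v => [s||] //; rewrite /finv /= ?lee_fin => r1 rs.
- by rewrite lef_pV2 ?posrE ?(lt_le_trans ltr01) // (le_trans r1).
- by rewrite invr_ge0 (le_trans ler01 r1).
Qed.

Lemma finvy : finv +oo = 0%R.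
Proof. by rewrite /finv eqxx. Qed.

Lemma finv_nat (k : nat) : finv (k%:R)%:E = (k%:R)^-1%R.
Proof. by []. Qed.

Lemma finv_bound (k d : nat) (u : \bar R) : (0 < k)%N -> (0 < d)%N -> 1 <= u ->
  (k%:R)%:E <= (d%:R)%:E * u -> (finv u <= d%:R / k%:R)%R.
Proof.
move=> k0 d0; case: u => [r||] //= r1; rewrite /finv /=.
  rewrite -EFinM lee_fin => kr.
  have r0 : (0 < r)%R by rewrite (lt_le_trans ltr01) // -lee_fin.
  rewrite -[leRHS]invf_div lef_pV2 ?posrE ?divr_gt0 ?ltr0n //.
  by rewrite ler_pdivrMr ?ltr0n // mulrC.
by move=> _; rewrite divr_ge0.
Qed.

Lemma nu_ge1 A K g : A g -> 1 <= nu R A K g.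
Proof.
move=> Ag; rewrite /nu; case: pselect => Kg.
  apply: le_trans (ereal_sup_ubound _); last first.
    by exists g => //; split => //; exists 1%Z; rewrite /= expg1.
  apply: le_ereal_inf_tmp => _ [m [m0 _] <-].
  by rewrite lee_fin ler1n.
apply: ereal_sup_ubound; exists 1%Z => //; split => //.
by exists g; split => //; rewrite /= expg1.
Qed.

Lemma nconj_back N x c : normal_in setT N -> N (x ^ c)%g -> N x.
Proof. by move=> nN /(nconj c^-1 nN); rewrite conjgK. Qed.

Lemma nconjI K H x c : normal_in setT K -> normal_in setT H ->
  (K `&` H) x -> (K `&` H) (x ^ c)%g.
Proof. by move=> nK nH [Kx Hx]; split; apply: nconj. Qed.

Lemma nconjI_back K H x c : normal_in setT K -> normal_in setT H ->
  (K `&` H) (x ^ c)%g -> (K `&` H) x.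
Proof. by move=> nK nH [Kx Hx]; split; apply: (nconj_back (c:=c)). Qed.

Lemma nu_conj H K s c : normal_in setT H -> normal_in setT K ->
  nu R H (K `&` H) s <= nu R H (K `&` H) (s ^ c)%g.
Proof.
move=> nH nK; rewrite /nu; case: pselect => Ks; case: pselect => Ksc.
- apply: ge_ereal_sup => _ [b [Hb [n e]] <-].
  apply: (le_trans _ (ereal_sup_ubound (x:=coset_order R (K `&` H) (b ^ c)%g) _)).
    rewrite -[leRHS]mul1e; apply: (@co_le _ _ _ _ 1%N) => // m _ h.
    by rewrite mul1n; apply: (nconjI_back (c:=c) nK nH); rewrite conjXg.
  exists (b ^ c)%g => //; split; first exact: nconj.
  by exists n; rewrite zpowJ e.
- by exfalso; apply: Ksc; apply: nconjI.
- by exfalso; apply: Ks; apply: (nconjI_back (c:=c)).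
- apply: ge_ereal_sup => _ [n [n0 [b [Hb e]]] <-].
  apply: ereal_sup_ubound; exists n => //; split => //.
  by exists (b ^ c)%g; split; [apply: nconj|rewrite zpowJ e].
Qed.

Lemma zpow_root H a d n s : is_subgroup H -> (0 < d)%N -> H (a ^+ d)%g ->
  (forall j, (0 < j < d)%N -> ~ H (a ^+ j)%g) -> H s -> zpow a n = s ->
  exists q, zpow (a ^+ d)%g q = s.
Proof.
move=> sH d0 Hd dmin Hs; case: n => k /= e.
  have dk : (d %| k)%N by apply: (min_power_dvd sH d0 Hd dmin); rewrite e.
  by exists (Posz (k %/ d)); rewrite /= -expgnA mulnC divnK.
have dk : (d %| k.+1)%N.
  by apply: (min_power_dvd sH d0 Hd dmin); apply: sgVV => //; rewrite e.
have t0 : (0 < k.+1 %/ d)%N by rewrite divn_gt0 // dvdn_leq.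
exists (Negz (k.+1 %/ d).-1); rewrite /= prednK // -expgnA mulnC divnK //.
Qed.

Lemma nu_H_K H K a d n s : normal_in setT H -> (0 < d)%N -> H (a ^+ d)%g ->
  (forall j, (0 < j < d)%N -> ~ H (a ^+ j)%g) -> H s -> K s -> zpow a n = s ->
  coset_order R K a <= (d%:R)%:E * nu R H (K `&` H) s.
Proof.
move=> nH d0 Hd dmin Hs Ks e.
have [q eq] := zpow_root nH.1 d0 Hd dmin Hs e.
rewrite /nu; case: pselect => [KHs|nKHs]; last by exfalso; apply: nKHs.
apply: (le_trans (co_le (K2 := K `&` H) (b := (a ^+ d)%g) d0 _)).
  by move=> m _ [Km _]; rewrite expgnA.
apply: lee_wpmul2l; first by rewrite lee_fin ler0n.
by apply: ereal_sup_ubound; exists (a ^+ d)%g => //; split => //; exists q.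
Qed.

Lemma nu_H_nK H K a d (k : nat) s : normal_in setT H -> (0 < d)%N -> H (a ^+ d)%g ->
  (forall j, (0 < j < d)%N -> ~ H (a ^+ j)%g) -> H s -> ~ K s -> (0 < k)%N ->
  zpow a (Posz k) = s ->
  (k%:R)%:E <= (d%:R)%:E * nu R H (K `&` H) s.
Proof.
move=> nH d0 Hd dmin Hs Ks k0 e.
have dk : (d %| k)%N by apply: (min_power_dvd nH.1 d0 Hd dmin); move: Hs; rewrite -e.
rewrite /nu; case: pselect => [[]//|nKHs].
have -> : (k%:R)%:E = (d%:R)%:E * (((Posz (k %/ d))%:~R)%:E : \bar R).
  by rewrite -EFinM -natrM mulnC divnK.
apply: lee_wpmul2l; first by rewrite lee_fin ler0n.
apply: ereal_sup_ubound; exists (Posz (k %/ d)) => //; split.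
  by rewrite eqz_nat -lt0n divn_gt0 // dvdn_leq.
by exists (a ^+ d)%g; split => //; rewrite /= -expgnA mulnC divnK.
Qed.

Lemma nu_fin A K s : A s -> nu R A K s != +oo -> exists r, (1 <= r)%R /\ nu R A K s = r%:E.
Proof.
move=> As; have := nu_ge1 K As; case: (nu R A K s) => [r||] // r1 _.
by exists r; split => //; rewrite -lee_fin.
Qed.

Lemma nuG_K K s : K s -> nu R setT K s = +oo \/
  exists a n (k : nat), [/\ (0 < k)%N, zpow a n = s,
     coset_order R K a = (k%:R)%:E & nu R setT K s = (k%:R)%:E].
Proof.
move=> Ks; case: (eqVneq (nu R setT K s) +oo) => [->|nE]; [by left|right].
have [r [r1 E]] := nu_fin (I : setT s) nE.
have ub : forall b m, zpow b m = s -> coset_order R K b <= r%:E.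
  move=> b m eb; rewrite -E /nu; case: pselect => // ?.
  by apply: ereal_sup_ubound; exists b => //; split => //; exists m.
pose P := fun m : nat => `[< exists b n, zpow b n = s /\ coset_order R K b = (m%:R)%:E >].
have Pub : forall m, P m -> (m <= Num.Def.trunc r)%N.
  move=> m /asboolP [b [n [e co]]].
  rewrite truncn_ge_nat ?(le_trans ler01) // -lee_fin -co; exact: ub e.
have Pex : exists m, P m.
  case: (co_spec K s) => [[_ no]|[m [_ _ _ co]]].
    by exfalso; apply: (no 1%N) => //; rewrite expg1.
  by exists m; apply/asboolP; exists s, 1%Z; split => //; rewrite /= expg1.
case: (ex_maxnP Pex Pub) => k /asboolP [a [n [e co]]] kmax.
have cok : nu R setT K s = (k%:R)%:E.
  apply/eqP; rewrite eq_le; apply/andP; split; last first.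
    rewrite -co /nu; case: pselect => // ?.
    by apply: ereal_sup_ubound; exists a => //; split => //; exists n.
  rewrite {1}/nu; case: pselect => // ?; apply: ge_ereal_sup => _ [b [_ [m eb]] <-].
  case: (co_spec K b) => [[cob _]|[m' [m'0 _ _ cob]]].
    by have := ub b m eb; rewrite cob leye_eq.
  rewrite cob lee_fin ler_nat; apply: kmax; apply/asboolP; exists b, m.
  by split.
exists a, n, k; split => //.
by have := nu_ge1 K (I : setT s); rewrite cok lee_fin ler1n.
Qed.

Lemma nuG_nK K s : ~ K s -> nu R setT K s = +oo \/
  exists a (k : nat), [/\ (0 < k)%N, zpow a (Posz k) = s & nu R setT K s = (k%:R)%:E].
Proof.
move=> Ks; case: (eqVneq (nu R setT K s) +oo) => [->|nE]; [by left|right].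
have [r [r1 E]] := nu_fin (I : setT s) nE.
have ub : forall b (m : int), m != 0%R -> zpow b m = s -> ((m%:~R)%:E : \bar R) <= r%:E.
  move=> b m m0 eb; rewrite -E /nu; case: pselect => // ?.
  by apply: ereal_sup_ubound; exists m => //; split => //; exists b.
pose P := fun m : nat => `[< (0 < m)%N /\ exists b, zpow b (Posz m) = s >].
have Pub : forall m, P m -> (m <= Num.Def.trunc r)%N.
  move=> m /asboolP [m0 [b e]].
  rewrite truncn_ge_nat ?(le_trans ler01) // -lee_fin.
  by apply: (ub b (Posz m)) => //; rewrite eqz_nat -lt0n.
have Pex : exists m, P m by exists 1%N; apply/asboolP; split => //; exists s; rewrite /= expg1.
case: (ex_maxnP Pex Pub) => k /asboolP [k0 [a e]] kmax.
exists a, k; split => //.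
apply/eqP; rewrite eq_le; apply/andP; split; last first.
  rewrite /nu; case: pselect => // ?.
  apply: ereal_sup_ubound; exists (Posz k) => //; split; last by exists a.
  by rewrite eqz_nat -lt0n.
rewrite {1}/nu; case: pselect => // ?; apply: ge_ereal_sup => _ [m [m0 [b [_ eb]]] <-].
case: m m0 eb => m m0 eb.
  by rewrite lee_fin ler_nat; apply: kmax; apply/asboolP; split; [rewrite lt0n -eqz_nat|exists b].
by rewrite lee_fin (le_trans (_ : _ <= 0)%R) ?ler0n // NegzE mulrNz lerNl oppr0 ler0n.
Qed.

Lemma nuH_inf H K s : normal_in setT H -> finite_set (cosets H) -> H s ->
  nu R setT K s = +oo -> nu R H (K `&` H) s = +oo.
Proof.
move=> nH fH Hs E.
have h1 := nu_ge1 (K `&` H) Hs.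
have h0 : 0 <= nu R H (K `&` H) s by apply: le_trans h1; rewrite lee_fin.
have cl : nu R setT K s <= ((group_index H)%:R)%:E * nu R H (K `&` H) s.
  rewrite {1}/nu; case: pselect => Ks; apply: ge_ereal_sup.
    move=> _ [a [_ [n e]] <-].
    have [d [d0 didx Hd dmin]] := min_power a nH.1 fH.
    apply: (le_trans (nu_H_K nH d0 Hd dmin Hs Ks e)).
    by apply: lee_wpmul2r => //; rewrite lee_fin ler_nat.
  move=> _ [[k|k] [k0 [a [_ e]]] <-]; last first.
    apply: (le_trans (_ : _ <= 0)); last by apply: mule_ge0 => //; rewrite lee_fin.
    by rewrite lee_fin NegzE mulrNz lerNl oppr0 ler0n.
  have [d [d0 didx Hd dmin]] := min_power a nH.1 fH.
  have k0' : (0 < k)%N by rewrite lt0n -eqz_nat.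
  apply: (le_trans (nu_H_nK nH d0 Hd dmin Hs Ks k0' e)).
  by apply: lee_wpmul2r => //; rewrite lee_fin ler_nat.
move: cl; rewrite E; case: (nu R H (K `&` H) s) h1 => [r||] //= _.
Qed.

Lemma build_R H s a d : normal_in setT H -> finite_set (cosets H) ->
  commute s a -> (0 < d)%N -> H (a ^+ d)%g ->
  (forall j, (0 < j < d)%N -> ~ H (a ^+ j)%g) ->
  exists Rl : seq gT, (size Rl * d <= group_index H)%N /\
    (forall g, exists r h, [/\ r \in Rl, H h & (s ^ g)%g = ((s ^ r^-1) ^ h)%g]).
Proof.
move=> nH fH csa d0 Hd dmin.
pose C : seq (set gT) := fset_set (cosets H).
have uC : uniq C by apply: fset_uniq.
have cosC : forall X, X \in C -> exists x, X = lcoset x H.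
  move=> X; rewrite /C in_fset_set // => /set_mem [x _ <-]; by exists x.
have [Rl [sz cov]] := orbit_cover nH d0 Hd dmin uC cosC (fun x _ => coset_in (x * a)%g fH).
exists Rl; split; first exact: sz.
move=> g; have [r [j [h [rR Hh e]]]] := cov (g^-1)%g (coset_in _ fH).
have [h' [Hh' e']] := conj_cover nH csa Hh e.
by exists r, h'.
Qed.

Lemma finish_bound (sz d k idx : nat) (u : R) : (0 < d)%N -> (0 < k)%N ->
  (sz * d <= idx)%N -> (0 <= u)%R -> (u <= d%:R / k%:R)%R ->
  (sz%:R * u <= idx%:R * (k%:R)^-1)%R.
Proof.
move=> d0 k0 szd u0 ub.
apply: (le_trans (ler_wpM2l (ler0n _ sz) ub)).
rewrite mulrA -natrM ler_wpM2r ?invr_ge0 ?ler0n // ler_nat //.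
Qed.

Lemma per_elem H K M s : normal_in setT H -> normal_in setT K ->
  finite_set (cosets H) -> M `<=` H -> M s ->
  exists Rl : seq gT,
    (forall g, exists r h, [/\ r \in Rl, H h & (s ^ g)%g = ((s ^ r^-1) ^ h)%g]) /\
    ((size Rl)%:R * nuinv R H (K `&` H) s <= (group_index H)%:R * nuinv R setT K s)%R.
Proof.
move=> nH nK fH MH Ms; have Hs := MH s Ms.
have h1 := nu_ge1 (K `&` H) Hs.
have inf_case : nu R setT K s = +oo -> exists Rl : seq gT,
    (forall g, exists r h, [/\ r \in Rl, H h & (s ^ g)%g = ((s ^ r^-1) ^ h)%g]) /\
    ((size Rl)%:R * nuinv R H (K `&` H) s <= (group_index H)%:R * nuinv R setT K s)%R.
  move=> E; have [d [d0 _ Hd dmin]] := min_power s nH.1 fH.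
  have [Rl [_ cov]] := build_R nH fH (commute_refl s) d0 Hd dmin.
  exists Rl; split => //.
  by rewrite !nuinvE E (nuH_inf nH fH Hs E) finvy !mulr0.
have fin_case : forall a (k : nat), commute s a -> (0 < k)%N ->
    nu R setT K s = (k%:R)%:E ->
    (forall d, (0 < d)%N -> H (a ^+ d)%g -> (forall j, (0 < j < d)%N -> ~ H (a ^+ j)%g) ->
       (k%:R)%:E <= (d%:R)%:E * nu R H (K `&` H) s) ->
    exists Rl : seq gT,
    (forall g, exists r h, [/\ r \in Rl, H h & (s ^ g)%g = ((s ^ r^-1) ^ h)%g]) /\
    ((size Rl)%:R * nuinv R H (K `&` H) s <= (group_index H)%:R * nuinv R setT K s)%R.
  move=> a k csa k0 E kb.
  have [d [d0 _ Hd dmin]] := min_power a nH.1 fH.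
  have [Rl [sz cov]] := build_R nH fH csa d0 Hd dmin.
  exists Rl; split => //.
  rewrite !nuinvE E finv_nat; apply: (finish_bound d0 k0 sz).
    exact: finv_ge0.
  by apply: finv_bound => //; apply: kb.
case: (pselect (K s)) => Ks.
  case: (nuG_K Ks) => [E|[a [n [k [k0 e co E]]]]]; first exact: inf_case.
  apply: (fin_case a k) => //; first by rewrite -e; apply: zpow_commute.
  by move=> d d0 Hd dmin; rewrite -co; exact: (nu_H_K nH d0 Hd dmin Hs Ks e).
case: (nuG_nK Ks) => [E|[a [k [k0 e E]]]]; first exact: inf_case.
apply: (fin_case a k) => //; first by rewrite -e; apply: zpow_commute.
by move=> d d0 Hd dmin; exact: (nu_H_nK nH d0 Hd dmin Hs Ks k0 e).
Qed.

End NuLemmas.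
Section Assemble.
Variable R : realType.
Variable gT : groupType.
Implicit Types (S H K M N A : set gT) (x y a g : gT).

Lemma sum_le_const (T : Type) (l : seq T) (f : T -> R) (c : R) :
  (forall t, f t <= c) -> \sum_(t <- l) f t <= (size l)%:R * c.
Proof.
move=> fc; elim: l => [|t l IH]; first by rewrite big_nil mul0r.
by rewrite big_cons /= -addn1 natrD mulrDl mul1r addrC lerD.
Qed.

Lemma sum_ge0_in (T : eqType) (l : seq T) (f : T -> R) :
  (forall t, t \in l -> 0 <= f t) -> 0 <= \sum_(t <- l) f t.
Proof.
move=> h; rewrite big_seq; apply: sumr_ge0 => t; exact: h.
Qed.

Lemma sum_undup (T : eqType) (l : seq T) (f : T -> R) :
  (forall t, t \in l -> 0 <= f t) ->
  \sum_(t <- undup l) f t <= \sum_(t <- l) f t.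
Proof.
elim: l => [|t l IH] h //=; rewrite big_cons.
have IH' := IH (fun u ul => h u (@mem_behead _ (t :: l) u ul)).
case: ifP => tl.
  by rewrite -[leLHS]add0r lerD // h // mem_head.
by rewrite big_cons lerD.
Qed.

Lemma nuinv_ge0 A K x : A x -> 0 <= nuinv R A K x.
Proof. by move=> Ax; rewrite nuinvE; apply: finv_ge0; apply: nu_ge1. Qed.

Lemma nuinv_conj H K x c : normal_in setT H -> normal_in setT K -> H x ->
  nuinv R H (K `&` H) (x ^ c)%g <= nuinv R H (K `&` H) x.
Proof.
move=> nH nK Hx; rewrite !nuinvE; apply: finv_anti; first exact: nu_ge1.
exact: nu_conj.
Qed.

Lemma assemble H K M s : normal_in setT H -> normal_in setT K ->
  finite_set (cosets H) -> normal_in setT M -> M `<=` H ->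
  (forall y, y \in s -> M y) ->
  exists L : seq gT, [/\
    (forall l, l \in L -> exists y c, y \in s /\ l = (y ^ c)%g),
    (forall y, y \in s -> forall g, exists l h, [/\ l \in L, H h & (y ^ g)%g = (l ^ h)%g]) &
    relsize_list R H (K `&` H) L <= (group_index H)%:R * relsize_list R setT K s].
Proof.
move=> nH nK fH nM MH; elim: s => [|y s IH] sM.
  by exists [::]; split => //; rewrite /relsize_list !big_nil mulr0.
have [L' [LC cov sm]] := IH (fun z zs => sM z (@mem_behead _ (y :: s) z zs)).
have My : M y := sM y (mem_head _ _).
have [Rl [covy bd]] := per_elem R nH nK fH MH My.
exists ([seq (y ^ r^-1)%g | r <- Rl] ++ L'); split.
- move=> l; rewrite mem_cat => /orP [/mapP [r _ ->]|lL].
    by exists y, (r^-1)%g; rewrite mem_head.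
  by have [z [c [zs ->]]] := LC l lL; exists z, c; rewrite in_cons zs orbT.
- move=> z; rewrite in_cons => /orP [/eqP ->|zs] g.
    have [r [h [rR Hh e]]] := covy g.
    by exists (y ^ r^-1)%g, h; split => //; rewrite mem_cat; apply/orP; left; apply/mapP; exists r.
  have [l [h [lL Hh e]]] := cov z zs g.
  by exists l, h; split => //; rewrite mem_cat lL orbT.
rewrite /relsize_list big_cat big_map big_cons mulrDr lerD //.
apply: le_trans bd; apply: sum_le_const => r.
by apply: nuinv_conj => //; apply: MH.
Qed.

End Assemble.
Theorem mainTheorem14 (R : realType) (gT : groupType) (M K H : set gT) :
  normal_in setT M -> normal_in setT K ->
  (exists s : seq gT, ncl setT s = M) ->
  normal_in setT H -> finite_set (cosets H) -> M `<=` H ->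
  relsize R H (K `&` H) M <= (group_index H)%:R * relsize R setT K M.
Proof.
move=> nM nK [s0 es0] nH fH MH.
have idx0 : (0 < group_index H)%N.
  rewrite /group_index cardfs_gt0; apply/fset0Pn; exists (lcoset 1%g H).
  exact: coset_in.
rewrite /relsize.
set SG := [set relsize_list R setT K s | s in _].
have SGne : SG !=set0.
  exists (relsize_list R setT K (undup s0)); exists (undup s0) => //.
  by split; [exact: undup_uniq|split => //; rewrite ncl_undup].
rewrite -ler_pdivrMl ?ltr0n //; apply: (@lb_le_inf R SG _ SGne).
move=> _ [s [us [sA es]] <-]; rewrite ler_pdivrMl ?ltr0n //.
have sM : forall y, y \in s -> M y by move=> y ys; rewrite -es; apply: ncl_mem.
have [L [LC cov sm]] := assemble R nH nK fH nM MH sM.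
have LH : forall l, l \in L -> H l.
  move=> l /LC [y [c [ys ->]]]; apply: MH; apply: nconj => //; exact: sM.
apply: le_trans sm.
have hu : relsize_list R H (K `&` H) (undup L) <= relsize_list R H (K `&` H) L.
  exact: (sum_undup (fun t tL => nuinv_ge0 R (K `&` H) (LH t tL))).
apply: le_trans hu.
apply: ge_inf.
  exists 0 => _ [l [_ [lH _]] <-]; apply: sum_ge0_in => t tl.
  exact: nuinv_ge0 (lH t tl).
exists (undup L) => //; split; first exact: undup_uniq.
split; first by move=> y; rewrite mem_undup; apply: LH.
by rewrite ncl_undup; apply: (ncl_H_eq nH nM MH es LC cov).
Qed.
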